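(* Let $1\leq k\leq n$ and let $\Lambda_1,\dots,\Lambda_d\subset\mathbb{P}^n$ be $(k-1)$-dimensional linear subspaces satisfying $\mathrm{SP}(n-k)$. Let $m\geq 2$ and consider a partition of $\{1,\dots,d\}$ into the consecutive blocks $$D_1=\{1,\dots,d_1\},\ D_2=\{d_1+1,\dots,d_1+d_2\},\ \dots,\ D_m=\Big\{\textstyle\sum_{i=1}^{m-1}d_i+1,\dots,d\Big\},$$ where $d_j=|D_j|$, and let $S_j:=\mathrm{Span}(\Lambda_i : i\in D_j)$. Suppose that for every $j=1,\dots,m-1$: (i) the subspaces $\Lambda_i$, $i\in D_j$, satisfy $\mathrm{SP}(n-k)$; (ii) the subspaces $\Lambda_i$, $i\in\{1,\dots,d\}\setminus D_j$, do not satisfy $\mathrm{SP}(n-k)$; (iii) $\dim S_j\leq d_j+k-3-\varepsilon_j$ for some integer $\varepsilon_j\geq 0$. Then $$\dim\mathrm{Span}(\Lambda_1,\dots,\Lambda_d)\leq\dim S_m+\sum_{j=1}^{m-1}(d_j-\varepsilon_j)-m.$$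
   Context: For $(k-1)$-dimensional linear subspaces $\Lambda_1,\dots,\Lambda_e\subset\mathbb{P}^N$ (not necessarily distinct), $\mathrm{SP}(N-k)$ means: for every $j\in\{1,\dots,e\}$ and every $(N-k)$-dimensional linear subspace $L\subset\mathbb{P}^N$ meeting each $\Lambda_i$ with $i\neq j$, $L$ also meets $\Lambda_j$. *)

(* Defs.v *)
From HB Require Import structures.
From mathcomp Require Import all_boot all_order all_algebra.
Set Implicit Arguments. Unset Strict Implicit. Unset Printing Implicit Defensive.
Import Order.TTheory GRing.Theory Num.Theory.
Local Open Scope ring_scope.

(* Projective space P^N over F is modelled by the row vectors F^(N+1);
   a projective linear subspace is the row space of a square matrix
   'M[F]_(N.+1); its projective dimension is rank - 1 (empty = -1). *)

Definition pdim (F : fieldType) (N : nat) (A : 'M[F]_(N.+1)) : int :=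
  (\rank A)%:Z - 1.

Definition meets (F : fieldType) (N : nat) (A B : 'M[F]_(N.+1)) : bool :=
  (A :&: B)%MS != 0.

Definition spanS (F : fieldType) (N d : nat) (Lam : 'I_d -> 'M[F]_(N.+1))
  (A : {set 'I_d}) : 'M[F]_(N.+1) := (\sum_(i in A) Lam i)%MS.

Definition SP (F : fieldType) (N d : nat) (r : nat)
  (Lam : 'I_d -> 'M[F]_(N.+1)) (A : {set 'I_d}) : Prop :=
  forall j, j \in A -> forall L : 'M[F]_(N.+1), \rank L = r.+1 ->
    (forall i, i \in A -> i != j -> meets L (Lam i)) -> meets L (Lam j).

(* The j-th consecutive block (0-indexed) of sizes ds. *)
Definition block (d m : nat) (ds : 'I_m -> nat) (j : nat) : {set 'I_d} :=
  [set i : 'I_d | (\sum_(l < m | (l < j)%N) ds l <= i)%N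
                  && (i < \sum_(l < m | (l <= j)%N) ds l)%N].

(* Main.v *)
Require Import Defs.
From HB Require Import structures.
From mathcomp Require Import all_boot all_order all_algebra.
From mathcomp Require Import zify.
From Stdlib Require Import Classical_Prop.
Set Implicit Arguments. Unset Strict Implicit. Unset Printing Implicit Defensive.
Import Order.TTheory GRing.Theory Num.Theory.

Lemma cap_split (F : fieldType) p nn (A : 'M[F]_(p, nn)) (B Y Y' : 'M[F]_nn) :
  (A <= Y')%MS -> (Y <= Y')%MS -> (B :&: Y' <= (0:'M_nn)%R)%MS ->
  ((A + B) :&: Y <= A :&: Y)%MS.
Proof.
move=> sAY sYY' B0.
rewrite sub_capmx capmxSr andbT.
apply: submx_trans (capmxS (submx_refl _) sYY') _.
rewrite -(matrix_modl B sAY).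
by rewrite addsmx_sub submx_refl /=; apply: submx_trans B0 (sub0mx _ _).
Qed.

Lemma rank_zero (F : fieldType) nn p (A : 'M[F]_(p, nn)) : (A <= (0 : 'M_nn)%R)%MS -> \rank A = 0%N.
Proof. by rewrite submx0 => /eqP ->; rewrite mxrank0. Qed.

Lemma nz_mono (F : fieldType) nn p1 p2 (A : 'M[F]_(p1, nn)) (B : 'M[F]_(p2, nn)) :
  (A <= B)%MS -> A != 0%R -> B != 0%R.
Proof.
move=> sAB; apply: contra => /eqP B0; rewrite -submx0.
by apply: submx_trans sAB _; rewrite B0 sub0mx.
Qed.

Section LA.
Variable F : fieldType.


Variable m : nat.

Lemma sums_sub nn (S : 'I_m -> 'M[F]_nn) (J1 J2 : {set 'I_m}) :
  J1 \subset J2 -> (\sum_(j in J1) S j <= \sum_(j in J2) S j)%MS.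
Proof.
move=> sJ; apply/sumsmx_subP => j jJ; apply: (sumsmx_sup j) => //.
exact: (subsetP sJ).
Qed.

Lemma sums_U nn (S : 'I_m -> 'M[F]_nn) (J1 J2 : {set 'I_m}) :
  (\sum_(j in J1 :|: J2) S j :=: \sum_(j in J1) S j + \sum_(j in J2) S j)%MS.
Proof.
apply/eqmxP/andP; split.
  apply/sumsmx_subP => j; rewrite inE => /orP[] jJ.
    by apply: submx_trans (addsmxSl _ _); apply: (sumsmx_sup j).
  by apply: submx_trans (addsmxSr _ _); apply: (sumsmx_sup j).
by rewrite addsmx_sub !sums_sub // ?subsetUl ?subsetUr.
Qed.

Lemma sum_sub_split (c : 'I_m -> nat) (J K : {set 'I_m}) :
  J \subset K -> \sum_(j in K) c j = (\sum_(j in J) c j + \sum_(j in K :\: J) c j)%N.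
Proof. by move=> sJK; rewrite (@big_setID _ _ _ _ K J) (setIidPr sJK). Qed.



Lemma rado nn (S : 'I_m -> 'M[F]_nn) : forall t (c : 'I_m -> nat) (K : {set 'I_m}) (Y : 'M[F]_nn),
  (\sum_(j in K) c j + #|K| <= t)%N ->
  (forall J : {set 'I_m}, J \subset K -> \rank Y + \sum_(j in J) c j <= \rank (Y + \sum_(j in J) S j)%MS)%N ->
  exists N : 'M[F]_nn, [/\ (N <= \sum_(j in K) S j)%MS, (N :&: Y <= (0:'M_nn)%R)%MS
     & forall j, j \in K -> (c j <= \rank (N :&: S j))%N].
Proof.
elim=> [|t IH] c K Y ht hall.
  exists 0%R; split; first exact: sub0mx.
    exact: capmxSl.
  move=> j jK; move: ht; rewrite leqn0 addn_eq0 => /andP[_].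
  by rewrite cards_eq0 => /eqP K0; rewrite K0 inE in jK.
case: (boolP [exists J : {set 'I_m}, [&& J \subset K, J != set0, J != K &
   \rank Y + \sum_(j in J) c j == \rank (Y + \sum_(j in J) S j)%MS]]).
  case/existsP => J /and4P [sJK J0 JK /eqP tight].
  have cardJ : (#|J| < #|K|)%N by apply: proper_card; rewrite properEneq JK sJK.
  have cardKJ : (#|K :\: J| < #|K|)%N.
    rewrite cardsD (setIidPr sJK); move: J0; rewrite -card_gt0.
    have := subset_leq_card sJK; move: (#|J|) (#|K|) => a b; lia.
  have sumJ := sum_sub_split c sJK.
  have [N1 [sN1 N1Y rN1]] : exists N : 'M[F]_nn, [/\ (N <= \sum_(j in J) S j)%MS,
       (N :&: Y <= (0:'M_nn)%R)%MS & forall j, j \in J -> (c j <= \rank (N :&: S j))%N].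
    apply: IH.
      move: ht; rewrite sumJ; move: cardJ; move: (#|J|) (#|K|) => a b; lia.
    by move=> J' sJ'; apply: hall; apply: subset_trans sJ' sJK.
  set Y' := (Y + \sum_(j in J) S j)%MS.
  have [N2 [sN2 N2Y rN2]] : exists N : 'M[F]_nn, [/\ (N <= \sum_(j in (K :\: J)%SET) S j)%MS,
       (N :&: Y' <= (0:'M_nn)%R)%MS & forall j, j \in (K :\: J)%SET -> (c j <= \rank (N :&: S j))%N].
    apply: IH.
      move: ht; rewrite sumJ; move: cardKJ; move: (#|K :\: J|) (#|K|) => a b; lia.
    move=> J' sJ'.
    have sJ'K : J' \subset K by apply: subset_trans sJ' (subsetDl _ _).
    have sU : J :|: J' \subset K by rewrite subUset sJK sJ'K.
    have := hall _ sU.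
    have -> : \sum_(j in J :|: J') c j = (\sum_(j in J) c j + \sum_(j in J') c j)%N.
      rewrite (sum_sub_split c (subsetUl J J')); congr (_ + _)%N.
      apply: eq_bigl => j; rewrite !inE; case jJ: (j \in J); case jJ': (j \in J') => //=.
      by have := subsetP sJ' j; rewrite jJ' inE jJ => /(_ isT).
    have -> : \rank (Y + \sum_(j in J :|: J') S j)%MS = \rank (Y' + \sum_(j in J') S j)%MS.
      by rewrite /Y' -addsmxA; apply: eqmx_rank; apply/eqmxP; exact: (adds_eqmx (eqmx_refl Y) (sums_U S J J')).
    by rewrite /Y' -tight addnA.
  exists (N1 + N2)%MS; split.
  - rewrite addsmx_sub; apply/andP; split.
      by apply: submx_trans sN1 (sums_sub _ sJK).
    by apply: submx_trans sN2 (sums_sub _ (subsetDl _ _)).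
  - apply: submx_trans N1Y.
    apply: (cap_split (Y' := Y')) => //.
      by apply: submx_trans sN1 (addsmxSr _ _).
    exact: addsmxSl.
  - move=> j jK; case jJ: (j \in J).
      apply: leq_trans (rN1 j jJ) _; apply: mxrankS.
      by apply: capmxS => //; apply: addsmxSl.
    have jKJ : j \in (K :\: J)%SET by rewrite inE jJ jK.
    apply: leq_trans (rN2 j jKJ) _; apply: mxrankS.
    by apply: capmxS => //; apply: addsmxSr.
move=> notight.
have notight' : forall J : {set 'I_m}, J \subset K -> J != set0 -> J != K ->
    (\rank Y + \sum_(j in J) c j < \rank (Y + \sum_(j in J) S j)%MS)%N.
  move=> J sJK J0 JK; rewrite ltn_neqAle hall // andbT.
  apply/negP => /eqP E; move/negP: notight; apply; apply/existsP; exists J.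
  by rewrite sJK J0 JK E eqxx.
case: (boolP [exists j0 in K, 0 < c j0]%N); last first.
  move=> /existsPn nc; exists 0%R; split; first exact: sub0mx.
    exact: capmxSl.
  by move=> j jK; have := nc j; rewrite jK /= lt0n negbK => /eqP ->.
case/exists_inP => j0 j0K cj0.
have sj0 : [set j0] \subset K by rewrite sub1set.
have hj0 := hall _ sj0; rewrite !big_set1 in hj0.
have nsY : ~~ (S j0 <= Y)%MS.
  apply/negP => sY; move: hj0; rewrite (eqmx_rank (introT eqmxP (addsmx_idPl sY))).
  by move: cj0; move: (c j0) (\rank Y) => a b; lia.
case/row_subPn: nsY => i0 nvY.
set v := row i0 (S j0).
have vS : (v <= S j0)%MS by apply: row_sub.
have rv : \rank v = 1%N.
  rewrite rank_rV; case: eqP => // v0; move: nvY; by rewrite -/v v0 sub0mx.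
have vY0 : \rank (v :&: Y)%MS = 0%N.
  apply/eqP; rewrite -leqn0 leqNgt; apply/negP => r0.
  have r1 : \rank (v :&: Y)%MS = \rank v.
    by apply/eqP; rewrite eqn_leq mxrankS ?capmxSl //= rv.
  have := mxrank_leqif_sup (capmxSl v Y); rewrite r1 => -[_].
  by rewrite eqxx => /esym sv; move: nvY; rewrite -/v (submx_trans sv) // capmxSr.
set Y' := (v + Y)%MS.
have rY' : \rank Y' = (\rank Y).+1.
  have := mxrank_sum_cap v Y; rewrite vY0 rv addn0 /Y' => ->; by rewrite add1n.
set c' := fun j => if j == j0 then (c j).-1 else c j.
have sumc' : forall J : {set 'I_m}, j0 \in J -> \sum_(j in J) c j = (\sum_(j in J) c' j).+1.
  move=> J j0J; rewrite (big_setD1 _ j0J) (big_setD1 _ j0J) /c' eqxx.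
  rewrite -addSn prednK //; congr (_ + _)%N; apply: eq_bigr => j.
  by rewrite !inE => /andP[/negbTE -> _].
have sumc'n : forall J : {set 'I_m}, j0 \notin J -> \sum_(j in J) c' j = \sum_(j in J) c j.
  move=> J nj0J; apply: eq_bigr => j jJ; rewrite /c'; case: eqP => // ej.
  by move: nj0J; rewrite -ej jJ.
have [N' [sN' N'Y' rN']] : exists N : 'M[F]_nn, [/\ (N <= \sum_(j in K) S j)%MS,
       (N :&: Y' <= (0:'M_nn)%R)%MS & forall j, j \in K -> (c' j <= \rank (N :&: S j))%N].
  apply: IH.
    by move: ht; rewrite (sumc' _ j0K) addSn ltnS.
  move=> J sJK; case j0J: (j0 \in J).
    have := hall _ sJK; rewrite (sumc' _ j0J) rY' addSnnS => h.
    apply: leq_trans h _; apply: mxrankS; apply: addsmxS => //; exact: addsmxSr.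
  rewrite sumc'n ?j0J // rY'.
  case: (eqVneq J set0) => [->|J0].
    by rewrite big_set0 addn0 -rY' mxrankS // addsmxSl.
  have JK : J != K by apply/eqP => E; move: j0J; rewrite E j0K.
  have := notight' _ sJK J0 JK; rewrite addSn => h.
  apply: leq_trans h _; apply: mxrankS; apply: addsmxS => //; exact: addsmxSr.
exists (v + N')%MS; split.
- rewrite addsmx_sub sN' andbT; apply: submx_trans vS _; exact: (sumsmx_sup j0).
- have : (v :&: Y <= (0 : 'M_nn)%R)%MS by rewrite submx0 -mxrank_eq0 vY0.
  apply: submx_trans; apply: (cap_split (Y' := Y')) => //.
    exact: addsmxSl.
  exact: addsmxSr.
- move=> j jK; case: (eqVneq j j0) => [->|nj].
    have := rN' j0 j0K; rewrite /c' eqxx => h.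
    have vN0 : \rank (v :&: (N' :&: S j0))%MS = 0%N.
      apply: rank_zero; apply: submx_trans N'Y'.
      by rewrite capmxC; apply: capmxS; [exact: capmxSl | exact: addsmxSl].
    have := mxrank_sum_cap v (N' :&: S j0)%MS; rewrite vN0 rv addn0 => e.
    have : (\rank (v + (N' :&: S j0)) <= \rank ((v + N') :&: S j0))%N.
      apply: mxrankS; rewrite sub_capmx; apply/andP; split.
        by apply: addsmxS => //; exact: capmxSl.
      by rewrite addsmx_sub vS capmxSr.
    rewrite e; move: h cj0; move: (c j0) (\rank (N' :&: S j0)) (\rank ((v + N') :&: S j0)) => a b d; lia.
  have := rN' j jK; rewrite /c' (negbTE nj) => h.
  apply: leq_trans h _; apply: mxrankS; apply: capmxS => //; exact: addsmxSr.
Qed.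

Lemma rank_sumsU nn (S : 'I_m -> 'M[F]_nn) (Y : 'M[F]_nn) (J J' : {set 'I_m}) :
  \rank (Y + \sum_(j in J :|: J') S j)%MS = \rank (Y + \sum_(j in J) S j + \sum_(j in J') S j)%MS.
Proof.
by rewrite -addsmxA; apply: eqmx_rank; apply/eqmxP; exact: (adds_eqmx (eqmx_refl Y) (sums_U S J J')).
Qed.

Lemma main_la nn (S : 'I_m -> 'M[F]_nn) (c : 'I_m -> nat) (K : {set 'I_m}) (Y : 'M[F]_nn) :
  K != set0 -> (\rank Y + \sum_(j in K) c j <= \rank (Y + \sum_(j in K) S j)%MS)%N ->
  exists J : {set 'I_m}, [/\ J \subset K, J != set0 &
    exists N : 'M[F]_nn, (N :&: (Y + \sum_(j in (K :\: J)%SET) S j) <= (0:'M_nn)%R)%MS /\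
       forall j, j \in J -> (c j <= \rank (N :&: S j))%N].
Proof.
move=> K0 hK.
pose h (J : {set 'I_m}) := (\rank (Y + \sum_(j in J) S j)%MS + \sum_(j in (K :\: J)%SET) c j)%N.
have P0 : set0 \proper K by rewrite properEneq eq_sym K0 sub0set.
case: (@arg_minnP _ set0 (fun J => J \proper K) h P0) => J0 pJ0 minJ0.
move: (pJ0); rewrite properEneq => /andP[J0K sJ0K].
have hmin : forall J1 : {set 'I_m}, J1 \subset K -> (h J0 <= h J1)%N.
  move=> J1 sJ1; case: (eqVneq J1 K) => [->|nJ1]; last first.
    by apply: minJ0; rewrite properEneq nJ1 sJ1.
  apply: leq_trans (minJ0 _ P0) _.
  rewrite /h setDv setD0 !big_set0 addn0.
  by rewrite addsmx0_id.
set K' := (K :\: J0)%SET.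
set Y' := (Y + \sum_(j in J0) S j)%MS.
have [N [_ NY rN]] : exists N : 'M[F]_nn, [/\ (N <= \sum_(j in K') S j)%MS,
       (N :&: Y' <= (0:'M_nn)%R)%MS & forall j, j \in K' -> (c j <= \rank (N :&: S j))%N].
  apply: (@rado _ _ (\sum_(j in K') c j + #|K'|)%N) => // J sJ.
  have sJ1 : J0 :|: J \subset K.
    by rewrite subUset sJ0K (subset_trans sJ) // subsetDl.
  have := hmin _ sJ1; rewrite /h rank_sumsU -/Y'.
  rewrite (sum_sub_split c sJ).
  have -> : (K' :\: J = K :\: (J0 :|: J))%SET by apply/setP => x; rewrite !inE negb_or; case: (x \in J); case: (x \in J0); case: (x \in K).
  move: (\rank Y') (\rank (Y' + \sum_(j in J) S j)%MS) (\sum_(j in J) c j) (\sum_(j in (K :\: (J0 :|: J))%SET) c j) => a b d e.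
  lia.
exists K'; split.
- exact: subsetDl.
- apply/negP; rewrite setD_eq0 => sKJ0; move/negP: J0K; apply.
  by rewrite eqEsubset sJ0K sKJ0.
- exists N; split => //.
  have -> : (K :\: K' = J0)%SET.
    by rewrite /K' setDDr setDv set0U (setIidPr sJ0K).
  exact: NY.
Qed.
End LA.

Lemma geo (F : fieldType) n k d (Lam : 'I_d -> 'M[F]_(n.+1)) (q : 'I_d)
  (L Y N : 'M[F]_(n.+1)) (P : pred 'I_d) :
  (k <= n)%N -> SP (n - k) Lam setT -> \rank (Lam q) = k -> \rank L = (n - k).+1 ->
  ~~ meets L (Lam q) -> ~~ P q ->
  (N :&: Y <= (0 : 'M_(n.+1))%R)%MS -> (forall i, ~~ P i -> (Lam i <= Y)%MS) ->
  (forall i, P i -> meets N (Lam i)) ->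
  (forall i, ~~ P i -> i != q -> meets L (Lam i)) -> False.
Proof.
move=> kn hSP rq rL nLq nPq NY0 sLY mN mL.
set L' := ((L :&: Y) + N)%MS.
have Lq0 : (L :&: Lam q <= (0 : 'M_(n.+1))%R)%MS by rewrite submx0; move: nLq; rewrite /meets negbK.
have L'q : (L' :&: Lam q <= (0 : 'M_(n.+1))%R)%MS.
  apply: submx_trans (cap_split (Y' := Y) _ (sLY q nPq) NY0) _.
    exact: capmxSr.
  apply: submx_trans Lq0; apply: capmxS => //; exact: capmxSl.
set C := ((L' + Lam q)^C)%MS.
set L'' := (L' + C)%MS.
have r1 : \rank (L' + Lam q)%MS = (\rank L' + k)%N.
  by have := mxrank_sum_cap L' (Lam q); rewrite (rank_zero L'q) addn0 rq.
have rC : \rank C = (n.+1 - (\rank L' + k))%N by rewrite mxrank_compl r1.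
have CL' : (L' :&: C <= (0 : 'M_(n.+1))%R)%MS.
  rewrite -(capmx_compl (L' + Lam q)%MS); apply: capmxS => //; exact: addsmxSl.
have r2 : \rank L'' = (n.+1 - k)%N.
  have := mxrank_sum_cap L' C; rewrite (rank_zero CL') addn0 rC -/L'' => ->.
  have := rank_leq_col (L' + Lam q)%MS; rewrite r1.
  move: (\rank L') => a; lia.
have full : \rank (L'' + Lam q)%MS = n.+1.
  apply/eqP; rewrite eqn_leq rank_leq_col /=.
  have hf : \rank ((L' + Lam q) + C)%MS = n.+1 by apply/eqP; exact: addsmx_compl_full.
  apply: (leq_trans (eq_leq (esym hf))).
  apply: mxrankS; rewrite addsmx_sub; apply/andP; split; last first.
    exact: submx_trans (addsmxSr L' C) (addsmxSl _ _).
  rewrite addsmx_sub; apply/andP; split; last exact: addsmxSr.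
  exact: submx_trans (addsmxSl L' C) (addsmxSl _ _).
have capq : \rank (L'' :&: Lam q)%MS = 0%N.
  have := mxrank_sum_cap L'' (Lam q); rewrite full r2 rq.
  move: (\rank (L'' :&: Lam q)%MS); lia.
have sL'L'' : (L' <= L'')%MS by apply: addsmxSl.
suff : meets L'' (Lam q) by rewrite /meets -mxrank_eq0 capq.
apply: (hSP q (in_setT q) L''); first by rewrite r2 subSn.
move=> i _ iq.
case Pi: (P i).
  apply: (nz_mono _ (mN i Pi)); apply: capmxS => //.
  apply: submx_trans _ sL'L''; exact: addsmxSr.
apply: (nz_mono _ (mL i (negbT Pi) iq)); rewrite sub_capmx capmxSr andbT.
apply: submx_trans _ sL'L''; rewrite /L'; apply: submx_trans _ (addsmxSl (L :&: Y)%MS N).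
rewrite sub_capmx capmxSl /=.
by apply: submx_trans (capmxSr _ _) _; apply: sLY; rewrite Pi.
Qed.

Section Blocks.
Variables (d m : nat) (ds : 'I_m -> nat).

Definition pre (t : nat) := \sum_(l < m | (l < t)%N) ds l.

Lemma pre_S (l : 'I_m) : pre l.+1 = (pre l + ds l)%N.
Proof.
rewrite /pre (bigD1 l) //= addnC; congr (_ + _)%N; apply: eq_bigl => l'.
by rewrite ltnS ltn_neqAle andbC.
Qed.

Lemma pre_mono t1 t2 : (t1 <= t2)%N -> (pre t1 <= pre t2)%N.
Proof.
move=> le12; rewrite /pre !(big_mkcond (fun l : 'I_m => (l < _)%N)) /=.
apply: leq_sum => l _; case: ifP => // h; rewrite (leq_trans h le12) //.
Qed.

Lemma pre_tot : pre m = \sum_(l < m) ds l.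
Proof. by apply: eq_bigl => l; rewrite ltn_ord. Qed.

Lemma blockE (j : nat) (i : 'I_d) : (i \in block d ds j) = (pre j <= i < pre j.+1)%N.
Proof.
rewrite inE; congr (_ && (i < _))%N; apply: eq_bigl => l; by rewrite ltnS.
Qed.

Lemma block_disj (l1 l2 : 'I_m) (i : 'I_d) :
  i \in block d ds l1 -> i \in block d ds l2 -> l1 = l2.
Proof.
wlog lt12 : l1 l2 / (l1 <= l2)%N.
  move=> W h1 h2; case: (leqP l1 l2) => h; first exact: W h h1 h2.
  by apply/esym; apply: W h2 h1; apply: ltnW.
rewrite !blockE => /andP[_ h1] /andP[h2 _].
apply/val_inj/eqP; rewrite eqn_leq lt12 /= leqNgt; apply/negP => lt.
have := pre_mono lt; move: h1 h2; move: (pre l1.+1) (pre l2) (nat_of_ord i) => a b e; lia.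
Qed.

Lemma block_cover (i : 'I_d) : (\sum_(j < m) ds j)%N = d -> exists l : 'I_m, i \in block d ds l.
Proof.
move=> hd.
suff : forall t, (t <= m)%N -> (i < pre t)%N -> exists l : 'I_m, i \in block d ds l.
  by move=> H; apply: (H m (leqnn m)); rewrite pre_tot hd ltn_ord.
elim=> [|t IH] tm.
  by rewrite /pre big_pred0.
case: (ltnP i (pre t)) => [lt _|ge lt]; first exact: IH (ltnW tm) lt.
exists (Ordinal tm); rewrite blockE /=; by rewrite ge lt.
Qed.

Lemma block_nonempty (j : 'I_m) : (0 < ds j)%N -> (\sum_(j < m) ds j)%N = d ->
  exists i : 'I_d, i \in block d ds j.
Proof.
move=> dj hd.
have lt : (pre j < d)%N.
  have := pre_mono (ltn_ord j : (j.+1 <= m)%N); rewrite pre_tot hd pre_S.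
  move: dj; move: (pre j) (ds j) => a b; lia.
exists (Ordinal lt); rewrite blockE /= leqnn pre_S /=; move: dj; move: (pre j) (ds j) => a b; lia.
Qed.

End Blocks.

Lemma sumZ (I : finType) (P : pred I) (G : I -> nat) :
  (\sum_(i | P i) (G i)%:Z = (\sum_(i | P i) G i)%N%:Z)%R.
Proof. by rewrite (big_morph Posz PoszD (erefl _)). Qed.

Unset Implicit Arguments.
Local Open Scope ring_scope.

Theorem lemma2p15 (F : numClosedFieldType) (n k d m : nat)
  (Lam : 'I_d -> 'M[F]_(n.+1)) (ds : 'I_m -> nat) (eps : 'I_m -> nat) :
  (1 <= k)%N -> (k <= n)%N ->
  (forall i, \rank (Lam i) = k) ->
  SP (n - k) Lam setT ->
  (2 <= m)%N ->
  (forall j, 0 < ds j)%N ->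
  (\sum_(j < m) ds j)%N = d ->
  (forall j : 'I_m, (j < m.-1)%N ->
      [/\ SP (n - k) Lam (block d ds j),
          ~ SP (n - k) Lam (~: block d ds j)
        & pdim (spanS Lam (block d ds j))
            <= (ds j)%:Z + k%:Z - 3 - (eps j)%:Z]) ->
  pdim (spanS Lam setT) <=
    pdim (spanS Lam (block d ds m.-1))
    + \sum_(j < m | (j < m.-1)%N) ((ds j)%:Z - (eps j)%:Z) - m%:Z.
Proof.
move=> k1 kn rL hSP m2 dpos dsum hj.
set Y := spanS Lam (block d ds m.-1).
pose S (j : 'I_m) := spanS Lam (block d ds j).
pose K := [set j : 'I_m | (j < m.-1)%N].
pose c (j : 'I_m) := (\rank (S j) + 1 - k)%N.
have cover := fun i => block_cover i dsum.
have Lsub : forall (i : 'I_d) (A : {set 'I_d}), i \in A -> (Lam i <= spanS Lam A)%MS.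
  by move=> i A iA; apply: (sumsmx_sup i).
have rS : forall j : 'I_m, (k <= \rank (S j))%N.
  move=> j; have [i ij] := block_nonempty (dpos j) dsum.
  by rewrite -(rL i); apply: mxrankS; apply: Lsub.
have hmain : ~ (\rank Y + \sum_(j in K) c j <= \rank (Y + \sum_(j in K) S j)%MS)%N.
  move=> H.
  have K0 : K != set0.
    apply/set0Pn; have lt0 : (0 < m)%N by apply: leq_trans m2.
    by exists (Ordinal lt0); rewrite inE /= -subn1 subn_gt0.
  have [J [sJK J0 [N [NY rN]]]] := main_la K0 H.
  case/set0Pn: J0 => j jJ.
  have jK := subsetP sJK j jJ; rewrite inE in jK.
  case: (hj j jK) => _ nSP _.
  have [q [qn [L [rLq [hL nq]]]]] : exists q, q \in ~: block d ds j /\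
      exists L : 'M[F]_(n.+1), \rank L = (n - k).+1 /\
        (forall i, i \in ~: block d ds j -> i != q -> meets L (Lam i)) /\ ~~ meets L (Lam q).
    apply: NNPP => H'; apply: nSP => q qin L rl hm; case: (boolP (meets L (Lam q))) => // nm; exfalso.
    by apply: H'; exists q; split => //; exists L.
  pose P := fun i => [exists l : 'I_m in J, i \in block d ds l].
  apply: (@geo _ n k d Lam q L (Y + \sum_(j in (K :\: J)%SET) S j)%MS N P kn hSP (rL q) rLq nq).
  - apply/negP => /exists_inP[l lJ ql].
    have lK := subsetP sJK l lJ; rewrite inE in lK.
    have lj : l != j.
      by apply/eqP => e; move: qn; rewrite inE -e ql.
    case: (hj l lK) => hl _ _.
    move/negP: nq; apply; apply: (hl q ql L rLq) => i il iq.
    apply: hL => //; rewrite inE; apply/negP => ij.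
    by move/eqP: lj; apply; apply: block_disj il ij.
  - exact: NY.
  - move=> i nPi; have [l il] := cover i.
    case: (eqVneq (l : nat) m.-1) => [e|ne].
      apply: submx_trans (addsmxSl _ _); apply: Lsub; by rewrite /Y -e.
    have lK : l \in K.
      rewrite inE ltn_neqAle ne /= -ltnS prednK ?ltn_ord //.
      by apply: leq_trans m2.
    have lJ : l \notin J by apply/negP => lJ; move/negP: nPi; apply; apply/exists_inP; exists l.
    apply: submx_trans (addsmxSr _ _); apply: (sumsmx_sup l); first by rewrite inE lJ lK.
    exact: Lsub.
  - move=> i /exists_inP[l lJ il].
    have := rN l lJ; rewrite /c => hc.
    set A := (N :&: S l)%MS.
    have sAS : (A + Lam i <= S l)%MS by rewrite addsmx_sub capmxSr Lsub.
    have := mxrank_sum_cap A (Lam i); rewrite rL => e.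
    have := mxrankS sAS => h2.
    have pos : (0 < \rank (A :&: Lam i))%N.
      move: hc e h2; move: (\rank (S l)) (\rank A) (\rank (A + Lam i)%MS) (\rank (A :&: Lam i)%MS) => a b e f; lia.
    rewrite /meets -mxrank_eq0 -lt0n; apply: leq_trans pos _; apply: mxrankS.
    by apply: capmxS => //; exact: capmxSl.
  - move=> i nPi iq; apply: hL => //; rewrite inE; apply/negP => ij.
    by move/negP: nPi; apply; apply/exists_inP; exists j.
have eqall : \rank (spanS Lam setT) = \rank (Y + \sum_(j in K) S j)%MS.
  apply/eqP; rewrite eqn_leq; apply/andP; split; apply: mxrankS.
    rewrite {1}/spanS; apply/sumsmx_subP => i _; have [l il] := cover i.
    case: (eqVneq (l : nat) m.-1) => [e|ne].
      apply: submx_trans (addsmxSl _ _); apply: Lsub; by rewrite /Y -e.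
    have lK : l \in K.
      rewrite inE ltn_neqAle ne /= -ltnS prednK ?ltn_ord //.
      by apply: leq_trans m2.
    apply: submx_trans (addsmxSr _ _); apply: (sumsmx_sup l) => //.
    exact: Lsub.
  rewrite addsmx_sub; apply/andP; split.
    by rewrite /Y {1}/spanS; apply/sumsmx_subP => i _; apply: Lsub; rewrite in_setT.
  apply/sumsmx_subP => j _; rewrite /S {1}/spanS; apply/sumsmx_subP => i _; apply: Lsub; by rewrite in_setT.
have hc : forall j, j \in K -> (c j + 1 + eps j <= ds j)%N.
  move=> j; rewrite inE => jK; case: (hj j jK) => _ _ h.
  have := rS j; rewrite /c /S; move: h; rewrite /pdim.
  move: (\rank (spanS Lam (block d ds j))) => r; lia.
have hsum : (\sum_(j in K) (c j + 1 + eps j) <= \sum_(j in K) ds j)%N by apply: leq_sum.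
rewrite big_split big_split /= sum1_card in hsum.
have cK : #|K| = m.-1.
  rewrite -sum1_card.
  rewrite (eq_bigl (fun j : 'I_m => true && (j < m.-1)%N)); last by move=> j; rewrite inE.
  rewrite -(big_ord_widen_cond m (fun _ => true) (fun _ => 1%N) (leq_pred m)).
  by rewrite sum1_card card_ord.
have eK : forall G : 'I_m -> nat, \sum_(j in K) G j = \sum_(j < m | (j < m.-1)%N) G j.
  by move=> G; apply: eq_bigl => j; rewrite inE.
rewrite sumrB !sumZ -!eK /pdim eqall.
move: hmain hsum; rewrite cK.
move: (\rank (Y + \sum_(j in K) S j)%MS) (\rank Y) (\sum_(j in K) c j)%N
  (\sum_(j in K) eps j)%N (\sum_(j in K) ds j)%N => a b e f g.
move: m2; lia.
Qed.
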